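(* Let $(A,\varphi,\phi_A,[\cdot,\cdot]_A,a_A,K,\langle\cdot,\cdot\rangle)$ be a para-Kähler hom-Lie algebroid, $\Omega(X,Y)=\langle(\phi_A\circ K)X,Y\rangle$, and $\nabla^a$ the connection determined by $\Omega(\nabla^{a}_XY,\phi_A(Z))=a_A(\phi_A(X))\Omega(Y,Z)-\Omega(\phi_A(Y),[X,Z]_A)$. Then for $\epsilon\in\{1,-1\}$: $\nabla^a$ restricts to a product on $\Gamma(A^\epsilon)$, and $(\Gamma(A^\epsilon),\nabla^a,\phi_{A^\epsilon})$ is a hom-left symmetric algebra, i.e. for all $X,Y,Z\in\Gamma(A^\epsilon)$, $$\nabla^a_{\nabla^a_XY}\phi_A(Z)-\nabla^a_{\phi_A(X)}\nabla^a_YZ=\nabla^a_{\nabla^a_YX}\phi_A(Z)-\nabla^a_{\phi_A(Y)}\nabla^a_XZ;$$ its commutator $\nabla^a_XY-\nabla^a_YX$ equals $[X,Y]_A$ and defines a hom-Lie algebra structure on $\Gamma(A^\epsilon)$; consequently $(A^\epsilon,\varphi,\phi_{A^\epsilon},[\cdot,\cdot]_{A^\epsilon},a_{A^\epsilon})$ (restrictions of $\phi_A,[\cdot,\cdot]_A,a_A$) is a hom-Lie algebroid.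
   Context: Standing conventions. $M$ is a smooth manifold, $\varphi:M\to M$ a diffeomorphism, $\varphi^*f=f\circ\varphi$. A hom-bundle $(A\to M,\varphi,\phi_A)$ is a vector bundle $A\to M$ together with an invertible $\mathbb R$-linear map $\phi_A:\Gamma(A)\to\Gamma(A)$ with $\phi_A(fX)=\varphi^*(f)\phi_A(X)$. $\varphi^!TM$ is the pullback bundle; its sections are identified with $\mathbb R$-linear maps $D:C^\infty(M)\to C^\infty(M)$ with $D(fg)=D(f)\varphi^*(g)+\varphi^*(f)D(g)$. A hom-Lie algebroid $(A,\varphi,\phi_A,[\cdot,\cdot]_A,a_A)$ consists of a hom-bundle, a skew-symmetric $\mathbb R$-bilinear bracket on $\Gamma(A)$ with $\phi_A[X,Y]_A=[\phi_A X,\phi_A Y]_A$ and $[\phi_A(X),[Y,Z]_A]_A+[\phi_A(Y),[Z,X]_A]_A+[\phi_A(Z),[X,Y]_A]_A=0$ (a hom-Lie algebra), and a bundle map $a_A:A\to\varphi^!TM$ such that $[X,fY]_A=\varphi^*(f)[X,Y]_A+a_A(\phi_A(X))(f)\phi_A(Y)$, $\varphi^*\circ a_A(X)=a_A(\phi_A(X))\circ\varphi^*$, and $a_A([X,Y]_A)\circ\varphi^*=a_A(\phi_AX)\circ a_A(Y)-a_A(\phi_AY)\circ a_A(X)$. Pseudo-Riemannian metric: a symmetric nondegenerate bilinear form $\langle\cdot,\cdot\rangle$ on $A$ with $\langle\phi_AX,\phi_AY\rangle=\varphi^*\langle X,Y\rangle$. The hom-Levi-Civita connection is the unique $\mathbb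 R$-bilinear $\nabla:\Gamma(A)\times\Gamma(A)\to\Gamma(A)$ with $\nabla_{fX}Y=\varphi^*(f)\nabla_XY$, $\nabla_X(fY)=\varphi^*(f)\nabla_XY+a_A(\phi_AX)(f)\phi_A(Y)$, $[X,Y]_A=\nabla_XY-\nabla_YX$, and $a_A(\phi_AX)\langle Y,Z\rangle=\langle\nabla_XY,\phi_AZ\rangle+\langle\phi_AY,\nabla_XZ\rangle$. An almost para-complex structure is an invertible map $K:\Gamma(A)\to\Gamma(A)$ with $(\phi_A\circ K)^2=\mathrm{Id}$, $\phi_A\circ K=K\circ\phi_A$, and such that $A^1=\ker(\phi_A\circ K-\mathrm{Id})$ and $A^{-1}=\ker(\phi_A\circ K+\mathrm{Id})$ have the same rank (so $A=A^1\oplus A^{-1}$). $(K,\langle\cdot,\cdot\rangle)$ is almost para-Hermitian if $\langle(\phi_A\circ K)X,(\phi_A\circ K)Y\rangle=-\langle X,Y\rangle$. A para-Kähler hom-Lie algebroid is an almost para-Hermitian hom-Lie algebroid with $\nabla_X\phi_A(KY)=\phi_A(K(\nabla_XY))$ for all $X,Y$, $\nabla$ the hom-Levi-Civita connection. $\phi_{A^\epsilon}$ denotes the restriction of $\phi_A$ to $\Gamma(A^\epsilon)$. *)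

(* Defs.v *)
(* Algebraic (Serre-Swan style) model of a hom-Lie algebroid:
   C  plays the role of C^oo(M)  (a commutative R-algebra, R a real field),
   V  plays the role of Gamma(A) (a C-module),
   sigma : C -> C plays the role of phi^* = (. o varphi),
   sections of varphi^! TM are maps D : C -> C (R-linear sigma-derivations),
   sections of a subbundle are described by a predicate S : V -> Prop.  *)
From HB Require Import structures.
From mathcomp Require Import all_boot all_order all_algebra.
Set Implicit Arguments. Unset Strict Implicit. Unset Printing Implicit Defensive.
Import GRing.Theory.
Local Open Scope ring_scope.

Section HomLie.
Variables (R : realFieldType) (C : comAlgType R) (V : lmodType C).

Definition rsc (r : R) : C := r%:A.

(* sigma = varphi^* for a diffeomorphism varphi: an R-algebra automorphism *)
Definition is_diffeo_pullback (sigma : C -> C) : Prop :=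
  [/\ bijective sigma,
      forall f h, sigma (f + h) = sigma f + sigma h,
      forall f h, sigma (f * h) = sigma f * sigma h,
      sigma 1 = 1 &
      forall (r : R) f, sigma (r *: f) = r *: sigma f].

Definition is_pullback_vf (sigma : C -> C) (D : C -> C) : Prop :=
  (forall (r : R) f h, D (r *: f + h) = r *: D f + D h) /\
  (forall f h, D (f * h) = D f * sigma h + sigma f * D h).

Definition is_submodule (S : V -> Prop) : Prop :=
  S 0 /\ forall (f : C) X Y, S X -> S Y -> S (f *: X + Y).

Definition is_hom_bundle_on (S : V -> Prop) (sigma : C -> C) (phi : V -> V) : Prop :=
  [/\ is_submodule S,
      (forall X, S X -> S (phi X)),
      (forall Y, S Y -> exists2 X, S X & phi X = Y),
      (forall X Y, S X -> S Y -> phi X = phi Y -> X = Y) &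
      (forall f X Y, S X -> S Y -> phi (f *: X + Y) = sigma f *: phi X + phi Y)].

Definition is_hom_lie_algebra_on (S : V -> Prop) (phi : V -> V)
    (br : V -> V -> V) : Prop :=
  [/\ (forall X Y, S X -> S Y -> S (br X Y)),
      (forall (r : R) X Y Z, S X -> S Y -> S Z ->
          br (rsc r *: X + Y) Z = rsc r *: br X Z + br Y Z /\
          br Z (rsc r *: X + Y) = rsc r *: br Z X + br Z Y),
      (forall X Y, S X -> S Y -> br X Y = - br Y X),
      (forall X Y, S X -> S Y -> phi (br X Y) = br (phi X) (phi Y)) &
      (forall X Y Z, S X -> S Y -> S Z ->
          br (phi X) (br Y Z) + br (phi Y) (br Z X) + br (phi Z) (br X Y) = 0)].

Definition is_anchor_on (S : V -> Prop) (sigma : C -> C) (phi : V -> V)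
    (br : V -> V -> V) (a : V -> C -> C) : Prop :=
  [/\ (forall X, S X -> is_pullback_vf sigma (a X)),
      (forall f X Y h, S X -> S Y -> a (f *: X + Y) h = f * a X h + a Y h),
      (forall X Y f, S X -> S Y ->
          br X (f *: Y) = sigma f *: br X Y + a (phi X) f *: phi Y),
      (forall X f, S X -> sigma (a X f) = a (phi X) (sigma f)) &
      (forall X Y f, S X -> S Y ->
          a (br X Y) (sigma f) = a (phi X) (a Y f) - a (phi Y) (a X f))].

Definition is_hom_lie_algebroid_on (S : V -> Prop) (sigma : C -> C)
    (phi : V -> V) (br : V -> V -> V) (a : V -> C -> C) : Prop :=
  [/\ is_diffeo_pullback sigma,
      is_hom_bundle_on S sigma phi,
      is_hom_lie_algebra_on S phi br &
      is_anchor_on S sigma phi br a].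

Definition is_hom_lie_algebroid sigma phi br a : Prop :=
  is_hom_lie_algebroid_on (fun _ => True) sigma phi br a.

(* pseudo-Riemannian metric (nondegeneracy stated on sections) *)
Definition is_pseudo_metric (sigma : C -> C) (phi : V -> V) (g : V -> V -> C) : Prop :=
  [/\ (forall X Y, g X Y = g Y X),
      (forall f X Y Z, g (f *: X + Y) Z = f * g X Z + g Y Z),
      (forall X, (forall Y, g X Y = 0) -> X = 0) &
      (forall X Y, g (phi X) (phi Y) = sigma (g X Y))].

Definition is_hom_levi_civita (sigma : C -> C) (phi : V -> V) (br : V -> V -> V)
    (a : V -> C -> C) (g : V -> V -> C) (nabla : V -> V -> V) : Prop :=
  [/\ (forall X Y Z, nabla (X + Y) Z = nabla X Z + nabla Y Z /\
                     nabla X (Y + Z) = nabla X Y + nabla X Z),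
      (forall f X Y, nabla (f *: X) Y = sigma f *: nabla X Y),
      (forall f X Y, nabla X (f *: Y) = sigma f *: nabla X Y + a (phi X) f *: phi Y),
      (forall X Y, br X Y = nabla X Y - nabla Y X) &
      (forall X Y Z, a (phi X) (g Y Z) = g (nabla X Y) (phi Z) + g (phi Y) (nabla X Z))].

(* almost para-complex structure (phi o K assumed C-linear,
   the equal-rank condition is not expressible in this model) *)
Definition is_almost_para_complex (phi K : V -> V) : Prop :=
  [/\ bijective K,
      (forall X, phi (K (phi (K X))) = X),
      (forall X, phi (K X) = K (phi X)) &
      (forall f X Y, phi (K (f *: X + Y)) = f *: phi (K X) + phi (K Y))].

Definition is_para_kahler (sigma : C -> C) (phi : V -> V) (br : V -> V -> V)
    (a : V -> C -> C) (K : V -> V) (g : V -> V -> C) (nabla : V -> V -> V) : Prop :=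
  [/\ is_hom_lie_algebroid sigma phi br a,
      is_pseudo_metric sigma phi g,
      is_almost_para_complex phi K,
      (forall X Y, g (phi (K X)) (phi (K Y)) = - g X Y) &
      (is_hom_levi_civita sigma phi br a g nabla /\
       forall X Y, nabla X (phi (K Y)) = phi (K (nabla X Y)))].

Definition Omega (phi K : V -> V) (g : V -> V -> C) (X Y : V) : C := g (phi (K X)) Y.

End HomLie.

(* Main.v *)
Require Import Defs.
From HB Require Import structures.
From mathcomp Require Import all_boot all_order all_algebra.
From mathcomp Require Import ring.
Import GRing.Theory.
Local Open Scope ring_scope.

Lemma xx0 (M : zmodType) (x : M) : x = x + x -> x = 0.
Proof. by move/(congr1 (fun y => y - x)); rewrite subrr addrK => ->. Qed.

Lemma half0 (R : realFieldType) (C : lmodType R) (x : C) : x = - x -> x = 0.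
Proof.
move=> h; have h2 : x + x = 0 by rewrite {2}h subrr.
by rewrite -[x]scale1r (Num.Theory.splitr (1 : R)) mul1r scalerDl -scalerDr h2 scaler0.
Qed.

Lemma xy0 (M : zmodType) (x y : M) : x = y + x -> y = 0.
Proof. by move/(congr1 (fun z => z - x)); rewrite subrr addrK => ->. Qed.

Theorem mainTheorem7 (R : realFieldType) (C : comAlgType R) (V : lmodType C)
    (sigma : C -> C) (phi : V -> V) (br : V -> V -> V) (a : V -> C -> C)
    (K : V -> V) (g : V -> V -> C) (nabla nablaa : V -> V -> V) :
  is_para_kahler sigma phi br a K g nabla ->
  (forall X Y Z, Omega phi K g (nablaa X Y) (phi Z)
                 = a (phi X) (Omega phi K g Y Z) - Omega phi K g (phi Y) (br X Z)) ->
  forall eps : C, eps = 1 \/ eps = -1 ->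
  let S := fun X : V => phi (K X) = eps *: X in
  [/\ (forall X Y, S X -> S Y -> S (nablaa X Y)),
      (forall X Y Z, S X -> S Y -> S Z ->
         nablaa (nablaa X Y) (phi Z) - nablaa (phi X) (nablaa Y Z)
         = nablaa (nablaa Y X) (phi Z) - nablaa (phi Y) (nablaa X Z)),
      (forall X Y, S X -> S Y -> nablaa X Y - nablaa Y X = br X Y),
      is_hom_lie_algebra_on S phi (fun X Y => nablaa X Y - nablaa Y X) &
      is_hom_lie_algebroid_on S sigma phi br a].
Proof.
move=> [HLA PM APC Hg [LC HJ]] H eps Heps S.
case: HLA => Dif HB HL AN.
case: (Dif) => sbij sD sM s1 sZ.
case: (HB) => [[_ _] _ phisurj phiinj philin].
case: (HL) => brS brlin bras brphi brjac.
case: (AN) => avf alin abr asig acomm.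
case: PM => gsym glin gnd gphi.
case: APC => Kbij JJ phiK Jlin.
case: LC => nadd nl nr ntor nmet.
have s0 : sigma 0 = 0 by apply: xx0; rewrite -sD addr0.
have sN : forall f, sigma (- f) = - sigma f.
  by move=> f; apply/esym/addr0_eq; rewrite -sD subrr.
have sB : forall f h, sigma (f - h) = sigma f - sigma h by move=> f h; rewrite sD sN.
have seps : sigma eps = eps by case: Heps => ->; rewrite ?sN s1.
have phi0 : phi 0 = 0.
  by apply: xx0; have := philin 1 0 0 I I; rewrite scale1r addr0 s1 scale1r.
have phiZ : forall f X, phi (f *: X) = sigma f *: phi X.
  by move=> f X; have := philin f X 0 I I; rewrite !addr0 phi0 addr0.
have phiD : forall X Y, phi (X + Y) = phi X + phi Y.
  by move=> X Y; have := philin 1 X Y I I; rewrite scale1r s1 scale1r.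
have phiN : forall X, phi (- X) = - phi X.
  by move=> X; rewrite -scaleN1r phiZ sN s1 scaleN1r.
have phiB : forall X Y, phi (X - Y) = phi X - phi Y by move=> X Y; rewrite phiD phiN.
have J0 : phi (K 0) = 0.
  by apply: xx0; have := Jlin 1 0 0; rewrite scale1r addr0 scale1r.
have JZ : forall f X, phi (K (f *: X)) = f *: phi (K X).
  by move=> f X; have := Jlin f X 0; rewrite !addr0 J0 addr0.
have JD : forall X Y, phi (K (X + Y)) = phi (K X) + phi (K Y).
  by move=> X Y; have := Jlin 1 X Y; rewrite !scale1r.
have JN : forall X, phi (K (- X)) = - phi (K X).
  by move=> X; rewrite -scaleN1r JZ scaleN1r.
have JB : forall X Y, phi (K (X - Y)) = phi (K X) - phi (K Y) by move=> X Y; rewrite JD JN.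
have Jphi : forall X, phi (K (phi X)) = phi (phi (K X)) by move=> X; rewrite (phiK X).
have g0l : forall Z, g 0 Z = 0.
  by move=> Z; apply: xx0; have := glin 1 0 0 Z; rewrite scale1r addr0 mul1r.
have gZl : forall f X Z, g (f *: X) Z = f * g X Z.
  by move=> f X Z; have := glin f X 0 Z; rewrite !addr0 g0l addr0.
have gDl : forall X Y Z, g (X + Y) Z = g X Z + g Y Z.
  by move=> X Y Z; have := glin 1 X Y Z; rewrite scale1r mul1r.
have gNl : forall X Z, g (- X) Z = - g X Z.
  by move=> X Z; rewrite -scaleN1r gZl mulN1r.
have gBl : forall X Y Z, g (X - Y) Z = g X Z - g Y Z by move=> X Y Z; rewrite gDl gNl.
have gZr : forall f X Z, g Z (f *: X) = f * g Z X by move=> f X Z; rewrite gsym gZl gsym.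
have gDr : forall X Y Z, g Z (X + Y) = g Z X + g Z Y by move=> X Y Z; rewrite gsym gDl !(gsym Z).
have gNr : forall X Z, g Z (- X) = - g Z X by move=> X Z; rewrite gsym gNl gsym.
have gBr : forall X Y Z, g Z (X - Y) = g Z X - g Z Y by move=> X Y Z; rewrite gDr gNr.
have a0 : forall U, a U 0 = 0.
  move=> U; case: (avf U I) => aR _; apply: xx0.
  by have := aR 1 0 0; rewrite scale1r addr0 scale1r.
have aD : forall U f h, a U (f + h) = a U f + a U h.
  by move=> U f h; case: (avf U I) => aR _; have := aR 1 f h; rewrite !scale1r.
have aN : forall U h, a U (- h) = - a U h.
  move=> U h; case: (avf U I) => aR _; have := aR (-1) h 0.
  by rewrite !addr0 a0 addr0 !scaleN1r.
have aB : forall U f h, a U (f - h) = a U f - a U h by move=> U f h; rewrite aD aN.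
have a1 : forall U, a U 1 = 0.
  move=> U; case: (avf U I) => _ aM; apply: xx0.
  by have := aM 1 1; rewrite mulr1 s1 mulr1 mul1r.
have aeps : forall U, a U eps = 0 by move=> U; case: Heps => ->; rewrite ?aN a1 ?oppr0.
have aDl : forall X Y h, a (X + Y) h = a X h + a Y h.
  by move=> X Y h; have := alin 1 X Y h I I; rewrite scale1r mul1r.
have rsc1 : @rsc _ C 1 = 1 by rewrite /rsc scale1r.
have rscN1 : @rsc _ C (-1) = -1 by rewrite /rsc scaleN1r.
have brDl : forall X Y Z, br (X + Y) Z = br X Z + br Y Z.
  by move=> X Y Z; have [] := brlin 1 X Y Z I I I; rewrite rsc1 !scale1r.
have brDr : forall X Y Z, br Z (X + Y) = br Z X + br Z Y.
  by move=> X Y Z; have [] := brlin 1 X Y Z I I I; rewrite rsc1 !scale1r.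
have br0r : forall Z, br Z 0 = 0.
  by move=> Z; apply: xx0; rewrite -{1}(addr0 0) brDr.
have brNr : forall X Z, br Z (- X) = - br Z X.
  by move=> X Z; have [] := brlin (-1) X 0 Z I I I; rewrite rscN1 !addr0 br0r addr0 !scaleN1r.
have brphi' : forall X Y, br (phi X) (phi Y) = phi (br X Y) by move=> X Y; rewrite brphi.
have OmDl : forall U U' W, Omega phi K g (U + U') W = Omega phi K g U W + Omega phi K g U' W.
  by move=> U U' W; rewrite /Omega JD gDl.
have OmBl : forall U U' W, Omega phi K g (U - U') W = Omega phi K g U W - Omega phi K g U' W.
  by move=> U U' W; rewrite /Omega JB gBl.
have OmDr : forall U W W', Omega phi K g U (W + W') = Omega phi K g U W + Omega phi K g U W'.
  by move=> U W W'; rewrite /Omega gDr.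
have OmNr : forall U W, Omega phi K g U (- W) = - Omega phi K g U W.
  by move=> U W; rewrite /Omega gNr.
have OmPhi : forall U W, Omega phi K g (phi U) (phi W) = sigma (Omega phi K g U W).
  by move=> U W; rewrite /Omega Jphi gphi.
have Fnd : forall U, (forall Z, Omega phi K g U (phi Z) = 0) -> U = 0.
  move=> U hU; have JU : phi (K U) = 0.
    apply: gnd => Y; have [Z _ <-] := phisurj Y I; exact: hU.
  by rewrite -(JJ U) JU J0.
have Om0r : forall U, Omega phi K g U 0 = 0 by move=> U; rewrite /Omega gsym g0l.
have eps2 : eps * eps = 1 by case: Heps => ->; rewrite ?mulrNN mulr1.
have S0 : S 0 by rewrite /S J0 scaler0.
have SZ : forall f X Y, S X -> S Y -> S (f *: X + Y).
  by move=> f X Y; rewrite /S => hX hY; rewrite JD JZ hX hY scalerA mulrC -scalerA scalerDr.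
have SB : forall X Y, S X -> S Y -> S (X - Y).
  by move=> X Y; rewrite /S => hX hY; rewrite JB hX hY scalerBr.
have Sphi : forall X, S X -> S (phi X).
  by move=> X; rewrite /S => hX; rewrite Jphi hX phiZ seps.
have Snab : forall X Y, S Y -> S (nabla X Y).
  by move=> X Y; rewrite /S => hY; rewrite -HJ hY nr seps aeps scale0r addr0.
have iso : forall U W, S U -> S W -> g U W = 0.
  move=> U W; rewrite /S => hU hW; apply: half0.
  by have := Hg U W; rewrite hU hW gZl gZr mulrA eps2 mul1r.
have SJ : forall Y, S Y -> S (phi (K Y)) by move=> Y hY; rewrite /S hY JZ hY.
have Na : forall X Y, S X -> S Y -> nablaa X Y = nabla X Y.
  move=> X Y hX hY; apply/eqP; rewrite -subr_eq0; apply/eqP; apply: Fnd => Z.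
  rewrite OmBl H /Omega -HJ nmet ntor gBr Jphi.
  have z := iso _ _ (Sphi _ (SJ _ hY)) (Snab Z X hX).
  rewrite z; ring.
have c3 : forall X Y, S X -> S Y -> nablaa X Y - nablaa Y X = br X Y.
  by move=> X Y hX hY; rewrite !Na // ntor.
have SNa : forall X Y, S X -> S Y -> S (nablaa X Y) by move=> X Y hX hY; rewrite Na //; exact: Snab.
have SBr : forall X Y, S X -> S Y -> S (br X Y).
  by move=> X Y hX hY; rewrite ntor; apply: SB; apply: Snab.
have L : forall Y Z U, sigma (Omega phi K g (nablaa Y Z) U)
   = a (phi (phi Y)) (Omega phi K g (phi Z) U) - Omega phi K g (phi (phi Z)) (br (phi Y) U).
  move=> Y Z U; have [U' _ <-] := phisurj U I.
  by rewrite H sB asig // -!OmPhi -brphi'.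
have c2 : forall X Y Z, S X -> S Y -> S Z ->
         nablaa (nablaa X Y) (phi Z) - nablaa (phi X) (nablaa Y Z)
         = nablaa (nablaa Y X) (phi Z) - nablaa (phi Y) (nablaa X Z).
  move=> X Y Z hX hY hZ; apply/eqP; rewrite -subr_eq0; apply/eqP; apply: Fnd => W.
  have [W1 _ <-] := phisurj W I.
  have e : nablaa X Y = nablaa Y X + br X Y by rewrite -c3 // addrC subrK.
  rewrite !OmBl !H e phiD aDl brDl OmDr (OmPhi Z W1) (brphi X Y) // acomm //.
  rewrite -(brphi X W1) // -(brphi Y W1) // !OmPhi !L !aB.
  have := congr1 (Omega phi K g (phi (phi Z))) (brjac X Y W1 I I I).
  rewrite (bras W1 X) // (bras (phi W1) (br X Y)) // brNr !OmDr !OmNr Om0r.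
  move=> jac; rewrite -jac; ring.
have HLS : is_hom_lie_algebra_on S phi br.
  split.
  - exact: SBr.
  - by move=> r X Y Z _ _ _; apply: brlin.
  - by move=> X Y _ _; apply: bras.
  - by move=> X Y _ _; apply: brphi.
  - by move=> X Y Z _ _ _; apply: brjac.
split.
- exact: SNa.
- exact: c2.
- exact: c3.
- split.
  + by move=> X Y hX hY; rewrite c3 //; apply: SBr.
  + move=> r X Y Z hX hY hZ; have hS := SZ (@rsc _ C r) X Y hX hY.
    by rewrite !c3 //; apply: brlin.
  + by move=> X Y hX hY; rewrite !c3 //; apply: bras.
  + by move=> X Y hX hY; rewrite (c3 X Y) // (c3 _ _ (Sphi _ hX) (Sphi _ hY)); apply: brphi.
  + move=> X Y Z hX hY hZ.
    rewrite (c3 Y Z) // (c3 Z X) // (c3 X Y) //.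
    rewrite (c3 _ _ (Sphi _ hX) (SBr _ _ hY hZ)) (c3 _ _ (Sphi _ hY) (SBr _ _ hZ hX)).
    rewrite (c3 _ _ (Sphi _ hZ) (SBr _ _ hX hY)).
    exact: brjac.
- split.
  + exact: Dif.
  + split.
    * by split; [exact: S0 | exact: SZ].
    * exact: Sphi.
    * move=> Y hY; have [X _ eX] := phisurj Y I; exists X => //.
      apply: phiinj => //; rewrite -Jphi eX hY -eX phiZ seps //.
    * by move=> X Y _ _; apply: phiinj.
    * by move=> f X Y _ _; apply: philin.
  + exact: HLS.
  + split.
    * by move=> X _; apply: avf.
    * by move=> f X Y h _ _; apply: alin.
    * by move=> X Y f _ _; apply: abr.
    * by move=> X f _; apply: asig.
    * by move=> X Y f _ _; apply: acomm.
Qed.
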